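(* Let $p\ge 1$, $\alpha\in(0,1)$, $\varepsilon>0$ and $g\in\mathbb{R}^p$ with $g\neq 0$. Let $m$ be an index with $|g_m|=\max_d|g_d|$ and let $I_{12}$ be the $p\times p$ diagonal matrix with $(I_{12})_{dd}=1$ if $|g_d|\ge \alpha|g_m|$ and $0$ otherwise. Let $q_1:=\left(\|I_{12}g\|_1/\|I_{12}g\|_2\right)^2$ and $$c_{\alpha,\varepsilon}(q_1):=\left(\frac{\sqrt{2\alpha\sqrt{q_1(\alpha^2q_1 + 4\varepsilon(1-\alpha))} + q_1((1-\alpha)^3-2\alpha^2)} - (1-\alpha)\sqrt{q_1(1-\alpha)}}{\alpha\sqrt{4\varepsilon(1-\alpha)}}\right)^2.$$ If $$\Delta x_{12,c,\varepsilon}:=-I_{12}g\left(\frac{\alpha\, c_{\alpha,\varepsilon}(q_1)\,\varepsilon}{\|I_{12}g\|_1}+\frac{(1-\alpha)\sqrt{c_{\alpha,\varepsilon}(q_1)\,\varepsilon}}{\|I_{12}g\|_2}\right),$$ then $h_\alpha(\Delta x_{12,c,\varepsilon})=\varepsilon$, where $h_\alpha(v):=\alpha\|v\|_1+(1-\alpha)\|v\|_2^2$.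
   Context: $\varepsilon$ is the step size in the general stagewise procedure; $I_{12}$ selects the coordinates whose absolute gradient is at least $\alpha$ times the maximal absolute gradient. *)

(* Defs.v *)
From mathcomp Require Import all_boot all_order all_algebra.
Set Implicit Arguments. Unset Strict Implicit. Unset Printing Implicit Defensive.
Import Order.TTheory GRing.Theory Num.Theory.
Local Open Scope ring_scope.

Definition norm1 (R : rcfType) (p : nat) (v : 'I_p -> R) : R := \sum_(i < p) `|v i|.
Definition norm2 (R : rcfType) (p : nat) (v : 'I_p -> R) : R :=
  Num.sqrt (\sum_(i < p) v i ^+ 2).

(* I_12 g : diagonal 0/1 matrix applied to g; entry d kept iff |g_d| >= alpha |g_m| *)
Definition I12g (R : rcfType) (p : nat) (alpha : R) (g : 'I_p -> R) (m : 'I_p)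
  : 'I_p -> R :=
  fun d => if alpha * `|g m| <= `|g d| then g d else 0.

Definition c_ae (R : rcfType) (alpha eps q1 : R) : R :=
  ((Num.sqrt (2 * alpha * Num.sqrt (q1 * (alpha ^+ 2 * q1 + 4 * eps * (1 - alpha)))
              + q1 * ((1 - alpha) ^+ 3 - 2 * alpha ^+ 2))
    - (1 - alpha) * Num.sqrt (q1 * (1 - alpha)))
   / (alpha * Num.sqrt (4 * eps * (1 - alpha)))) ^+ 2.

Definition h_alpha (R : rcfType) (p : nat) (alpha : R) (v : 'I_p -> R) : R :=
  alpha * norm1 v + (1 - alpha) * norm2 v ^+ 2.

(* Main.v *)
Require Import Defs.
From mathcomp Require Import all_boot all_order all_algebra.
From mathcomp Require Import ring lra.
Import Order.TTheory GRing.Theory Num.Theory.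
Local Open Scope ring_scope.

Lemma alg (R : rcfType) (a e N1 N2 : R) :
  0 < a -> a < 1 -> 0 < e -> 0 < N1 -> 0 < N2 ->
  let q := (N1 / N2) ^+ 2 in let c := c_ae a e q in
  let t := a * c * e / N1 + (1 - a) * Num.sqrt (c * e) / N2 in
  0 <= t /\ a * (t * N1) + (1 - a) * (t ^+ 2 * N2 ^+ 2) = e.
Proof.
move=> a0 a1 e0 N10 N20 q c t.
set r := N1 / N2.
have r0 : 0 < r by rewrite divr_gt0.
have q0 : 0 <= q by exact: sqr_ge0.
have hq : q = r ^+ 2 by [].
have hN1 : N1 = r * N2 by rewrite /r mulrVK // unitfE gt_eqF.
set k := Num.sqrt (1 - a).
have k0 : 0 < k by rewrite sqrtr_gt0 subr_gt0.
have hk : 1 - a = k ^+ 2 by rewrite sqr_sqrtr // subr_ge0 ltW.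
set S := Num.sqrt (q * (a ^+ 2 * q + 4 * e * (1 - a))).
have hS2 : S ^+ 2 = q * (a ^+ 2 * q + 4 * e * (1 - a)).
  rewrite sqr_sqrtr // /q hk; apply: mulr_ge0; first exact: sqr_ge0.
  apply: addr_ge0; apply: mulr_ge0 => //; try exact: sqr_ge0; try exact: ltW.
  by apply: mulr_ge0; [lra| exact: ltW].
have S0 : 0 <= S by exact: sqrtr_ge0.
have hSq : a * q <= S.
  have -> : a * q = Num.sqrt ((a * q) ^+ 2).
    by rewrite sqrtr_sqr ger0_norm // mulr_ge0 ?sqr_ge0 // ltW.
  apply: ler_wsqrtr; rewrite -subr_ge0.
  have -> : q * (a ^+ 2 * q + 4 * e * (1 - a)) - (a * q) ^+ 2 = q * (4 * e * (1 - a)) by ring.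
  rewrite hk; apply: mulr_ge0; first exact: sqr_ge0.
  by apply: mulr_ge0; [nra | exact: sqr_ge0].
set inner := 2 * a * S + q * ((1 - a) ^+ 3 - 2 * a ^+ 2).
have hin' : inner = 2 * a * (S - a * q) + q * (k ^+ 2) ^+ 3 by rewrite /inner hk; ring.
have hin : 0 <= inner.
  rewrite hin'; apply: addr_ge0; first by apply: mulr_ge0; [nra| rewrite subr_ge0].
  by apply: mulr_ge0 => //; rewrite exprn_ge0 // sqr_ge0.
set Y := Num.sqrt inner.
have hY2 : Y ^+ 2 = inner by rewrite sqr_sqrtr.
have hYk : k ^+ 3 * r <= Y.
  have -> : k ^+ 3 * r = Num.sqrt ((k ^+ 3 * r) ^+ 2).
    by rewrite sqrtr_sqr ger0_norm // mulr_ge0 // ?exprn_ge0 // ltW.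
  apply: ler_wsqrtr; rewrite -/Y hin' -subr_ge0 hq.
  have -> : 2 * a * (S - a * r ^+ 2) + r ^+ 2 * (k ^+ 2) ^+ 3 - (k ^+ 3 * r) ^+ 2 = 2 * a * (S - a * q) by rewrite hq; ring.
  by apply: mulr_ge0; [nra| rewrite subr_ge0].
have hqk : Num.sqrt (q * (1 - a)) = r * k.
  by rewrite /q hk -exprMn sqrtr_sqr ger0_norm // mulr_ge0 // ltW.
set D := Num.sqrt (4 * e * (1 - a)).
have hD : D ^+ 2 = 4 * e * (1 - a) by rewrite sqr_sqrtr // hk; nra.
have D0 : 0 < D by rewrite sqrtr_gt0 hk; nra.
set X := Y - (1 - a) * (r * k).
have X0 : 0 <= X by rewrite /X hk; lra.
set u := X / (2 * a * k).
have u0 : 0 <= u by rewrite divr_ge0 //; nra.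
have hc : c = (X / (a * D)) ^+ 2 by rewrite /c /c_ae -/S -/inner -/Y hqk.
have hce : c * e = u ^+ 2.
  rewrite hc /u !expr_div_n !exprMn hD hk; field.
  by rewrite !gt_eqF.
have hsq : Num.sqrt (c * e) = u by rewrite hce sqrtr_sqr ger0_norm.
have ht : t = a * u ^+ 2 / N1 + k ^+ 2 * u / N2.
  by rewrite /t hsq -hk -(mulrA a c e) hce.
have tge : 0 <= t.
  rewrite ht; apply: addr_ge0; apply: divr_ge0; rewrite ?(ltW N10) ?(ltW N20) //.
    by apply: mulr_ge0; [exact: ltW | exact: sqr_ge0].
  by apply: mulr_ge0 => //; exact: sqr_ge0.
split => //.
set w := a * u ^+ 2 + k ^+ 2 * u * r.
have tN1 : t * N1 = w by rewrite ht /w hN1; field; rewrite !gt_eqF.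
have tN2 : t * N2 = w / r by rewrite ht /w hN1; field; rewrite !gt_eqF.
have h1 : Y = 2 * a * k * u + k ^+ 3 * r.
  rewrite /u /X hk; field; rewrite !gt_eqF //.
have h2 : 2 * k ^+ 2 * w + a * r ^+ 2 = S.
  have e1 := hY2; rewrite h1 /inner hk hq in e1.
  have e2 : 2 * a * (2 * k ^+ 2 * w + a * r ^+ 2 - S) = 0.
    rewrite /w; nra.
  move/eqP: e2; rewrite mulf_eq0 subr_eq0 => /orP [|/eqP //].
  by rewrite mulf_eq0 !gt_eqF //.
have h4 : k ^+ 2 * w ^+ 2 + a * r ^+ 2 * w = e * r ^+ 2.
  have e1 := hS2; rewrite -h2 hq hk in e1.
  have e2 : 4 * k ^+ 2 * (k ^+ 2 * w ^+ 2 + a * r ^+ 2 * w - e * r ^+ 2) = 0.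
    nra.
  move/eqP: e2; rewrite mulf_eq0 subr_eq0 => /orP [|/eqP //].
  by rewrite mulf_eq0 !gt_eqF // ?exprn_gt0 //.
rewrite tN1 -exprMn tN2 hk.
apply: (mulIf (x := r ^+ 2)); first by rewrite gt_eqF // exprn_gt0.
rewrite -h4; field; rewrite gt_eqF //.
Qed.

Theorem theorem4 (R : rcfType) (p : nat) (alpha eps : R) (g : 'I_p -> R) (m : 'I_p) :
  (1 <= p)%N ->
  0 < alpha -> alpha < 1 -> 0 < eps ->
  (exists d, g d != 0) ->
  (forall d, `|g d| <= `|g m|) ->
  let v := I12g alpha g m in
  let q1 := (norm1 v / norm2 v) ^+ 2 in
  let c := c_ae alpha eps q1 in
  let dx := fun d => - v d * (alpha * c * eps / norm1 v
                              + (1 - alpha) * Num.sqrt (c * eps) / norm2 v) in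
  h_alpha alpha dx = eps.
Proof.
move=> _ a0 a1 e0 [d gd] gm v q1 c dx.
have gm0 : 0 < `|g m| by apply: lt_le_trans (gm d); rewrite normr_gt0.
have vm : v m = g m.
  by rewrite /v /I12g ler_piMl ?normr_ge0 ?ltW.
have N10 : 0 < norm1 v.
  rewrite /norm1 (bigD1 m) //= vm; apply: ltr_wpDr => //.
  by apply: sumr_ge0 => i _; exact: normr_ge0.
have N20 : 0 < norm2 v.
  rewrite /norm2 sqrtr_gt0 (bigD1 m) //= vm; apply: ltr_wpDr.
    by apply: sumr_ge0 => i _; exact: sqr_ge0.
  by rewrite -real_normK ?num_real // exprn_gt0.
have [tge heq] := @alg R alpha eps (norm1 v) (norm2 v) a0 a1 e0 N10 N20.
set t := (X in 0 <= X) in tge heq.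
have hdx : dx = fun d => - v d * t by [].
rewrite /h_alpha hdx.
have -> : norm1 (fun d => - v d * t) = t * norm1 v.
  rewrite /norm1 mulr_sumr; apply: eq_bigr => i _.
  by rewrite normrM normrN (ger0_norm tge) mulrC.
have -> : norm2 (fun d => - v d * t) ^+ 2 = t ^+ 2 * norm2 v ^+ 2.
  rewrite /norm2 !sqr_sqrtr; last by apply: sumr_ge0 => i _; exact: sqr_ge0.
    rewrite mulr_sumr; apply: eq_bigr => i _; rewrite exprMn sqrrN mulrC //.
  by apply: sumr_ge0 => i _; exact: sqr_ge0.
by rewrite -heq mulrC (mulrC t).
Qed.
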